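(* Let $(\mathcal M,X,\bot)$ be a concurrent system and $\nu=(\nu_\alpha)_{\alpha\in X}$ a uniform measure for it, with induced fibred valuation $f_\alpha(x)=\nu_\alpha(\Uparrow x)$. For $\alpha\in X$, let $h_\alpha(c)=\sum_{c'\in\mathscr C,\ c\le c'}(-1)^{|c'|-|c|}f_\alpha(c')$ be the M\''obius transform of $f_\alpha$ on cliques. Then $h_\alpha(c)>0$ for every positive node $(\alpha,c)$ of the DSC.
   Context: A trace monoid $\mathcal M=\mathcal M(\Sigma,I)$ is $\langle\Sigma\mid ab=ba\ ((a,b)\in I)\rangle$, $\Sigma$ finite, $I$ irreflexive symmetric; $|x|$ is length. A clique is a trace of pairwise distinct letters pairwise in $I$ (including $\varepsilon$); $\mathscr C$ is the set of cliques, $\mathfrak C=\mathscr C\setminus\{\varepsilon\}$; $c\le c'$ for cliques means inclusion of letter sets. For $c,c'\in\mathfrak C$, $c\to c'$ means every letter of $c'$ is in relation $(\Sigma\times\Sigma)\setminus I$ with some letter of $c$. Each nonempty trace $x$ has a unique normal form $c_1\cdots c_h$, $c_i\in\mathfrak C$, $c_i\to c_{i+1}$; $C_i(x)=c_i$ ($i\le h$), $\varepsilon$ otherwise. A concurrent system $(\mathcal M,X,\bot)$: $X$ finite, $\bot\notin X$, right action of $\mathcal M$ on $X\cup\{\bot\}$ with $\bot\cdot x=\bot$; $\mathcal M_\alpha=\{x:\alpha\cdot x\ne\bot\}$, $\mathfrak C_\alpha=\mathfrak C\cap\mathcal M_\alpha$. DSC nodes are the pairs $(\alpha,c)$, $c\in\mathfrak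 C_\alpha$; $(\alpha,c)$ is positive if some $x\in\mathcal M_\alpha$ satisfies $C_1(xy)=c$ for all $y\in\mathcal M_{\alpha\cdot x}$. Boundary: $\partial\mathcal M$ = sequences $(c_i)_{i\ge1}$ in $\mathfrak C$ with $c_i\to c_{i+1}$ (product topology), $C_i$ projections; on $\mathcal M\cup\partial\mathcal M$, $\xi\le\xi'$ iff $C_i(\xi)\le C_i(\xi')$ for all $i$; $\Uparrow x=\{\xi\in\partial\mathcal M:x\le\xi\}$; $\partial\mathcal M_\alpha$ is the closure of $\mathcal M_\alpha$ in $\mathcal M\cup\partial\mathcal M$ intersected with $\partial\mathcal M$. A uniform measure is a family $(\nu_\alpha)_{\alpha\in X}$ of Borel probability measures on $\partial\mathcal M_\alpha$ with $\nu_\alpha(\Uparrow(xy))=\nu_\alpha(\Uparrow x)\nu_{\alpha\cdot x}(\Uparrow y)$ for $x\in\mathcal M_\alpha$, $y\in\mathcal M_{\alpha\cdot x}$, and $\nu_\alpha(\Uparrow x)=t^{|x|}\Delta(\alpha,\alpha\cdot x)$ for all $x\in\mathcal M_\alpha$, for some $t>0$ and $\Delta:X\times X\to\mathbb R_{>0}$. *)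

(* Defs.v *)
From HB Require Import structures.
From mathcomp Require Import all_boot all_order all_algebra.
From mathcomp Require Import all_classical all_reals all_analysis.
Set Implicit Arguments. Unset Strict Implicit. Unset Printing Implicit Defensive.
Import Order.TTheory GRing.Theory Num.Theory.
Local Open Scope ring_scope.

(* ---------- Trace monoid M(Sigma, I) ----------
   Traces are represented by words (seq Sigma); every function used below
   (length, action, normal form cliques) is invariant under commutation of
   independent letters, so quantifying over words = quantifying over traces. *)

Section Traces.
Variables (Sigma : finType) (I : rel Sigma).

Definition is_clique (c : {set Sigma}) : bool :=
  [forall a in c, forall b in c, (a != b) ==> I a b].

Definition clique_arrow (c c' : {set Sigma}) : bool :=
  [forall b in c', exists a in c, ~~ I a b].

(* Cartier-Foata normal form by the heap-of-pieces algorithm: the state is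
   (height h, levels s), with s i the clique at level i (0-based: s i = C_{i+1}). *)
Definition nf_step (st : nat * (nat -> {set Sigma})) (a : Sigma) :=
  let: (h, s) := st in
  let l := (\max_(i < h | [exists b in s i, ~~ I a b]) i.+1)%N in
  (maxn h l.+1, fun i => if i == l then a |: s i else s i).

Definition nf_state (w : seq Sigma) := foldl nf_step (0%N, fun _ => finset.set0) w.

(* Cl w i = C_{i+1}(w) : the (i+1)-th clique of the normal form, set0 beyond height *)
Definition Cl (w : seq Sigma) (i : nat) : {set Sigma} := (nf_state w).2 i.

(* carrier of infinite clique sequences; xi i stands for C_{i+1}(xi) *)
Definition cseq := nat -> {set Sigma}.

Definition boundary : set cseq :=
  [set xi | forall i, [/\ xi i != finset.set0, is_clique (xi i) & clique_arrow (xi i) (xi i.+1)]]%classic.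

(* Up-set  ⇑x = { xi in boundary | x <= xi }, x <= xi iff C_i(x) <= C_i(xi) for all i *)
Definition upset (w : seq Sigma) : set cseq :=
  [set xi | boundary xi /\ forall i, Cl w i \subset xi i]%classic.

End Traces.

(* the sigma-algebra on the boundary carrier: generated by the coordinate
   cylinders (= Borel sets of the product of discrete topologies) *)
Definition cseqT (Sigma : finType) := cseq Sigma.
HB.instance Definition _ (Sigma : finType) := gen_eqMixin (cseqT Sigma).
HB.instance Definition _ (Sigma : finType) := gen_choiceMixin (cseqT Sigma).
HB.instance Definition _ (Sigma : finType) :=
  isPointed.Build (cseqT Sigma) (fun _ => finset.set0).

Definition cylinders (Sigma : finType) : set (set (cseqT Sigma)) :=
  [set A | exists (i : nat) (c : {set Sigma}), A = [set xi | xi i = c]%classic]%classic.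

Definition BndSpace (Sigma : finType) := g_sigma_algebraType (@cylinders Sigma).

Section Concurrent.
Variables (Sigma X : finType) (I : rel Sigma) (act : X -> Sigma -> option X).

(* right action on X ∪ {⊥}, ⊥ = None *)
Definition act_opt (o : option X) (a : Sigma) : option X := obind (act^~ a) o.
Definition run (alpha : X) (w : seq Sigma) : option X := foldl act_opt (Some alpha) w.

(* the letter action respects commutations, hence is an action of M(Sigma,I) *)
Definition action_compatible : Prop :=
  forall (alpha : X) (a b : Sigma), I a b ->
    act_opt (act alpha a) b = act_opt (act alpha b) a.

Definition inM (alpha : X) (w : seq Sigma) : bool := run alpha w != None.

Definition cword (c : {set Sigma}) : seq Sigma := enum c.

(* ∂M_alpha: boundary points in the closure of M_alpha inside M ∪ ∂M
   (topology: the product topology on clique sequences, traces being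
   sequences eventually epsilon) *)
Definition boundary_at (alpha : X) : set (cseq Sigma) :=
  [set xi | boundary I xi /\
     forall n : nat, exists w, inM alpha w /\ forall i, (i < n)%N -> Cl I w i = xi i]%classic.

Definition positive_node (alpha : X) (c : {set Sigma}) : Prop :=
  [/\ is_clique I c, c != finset.set0, inM alpha (cword c) &
    exists2 x, inM alpha x &
      forall beta, run alpha x = Some beta ->
        forall y, inM beta y -> Cl I (x ++ y) 0 = c].

End Concurrent.

(* uniform measure: a family of Borel probability measures nu alpha on ∂M_alpha
   (represented as probability measures on the clique-sequence space carried
   by ∂M_alpha) *)
Definition uniform_measure (Sigma X : finType) (I : rel Sigma)
  (act : X -> Sigma -> option X) (R : realType)
  (nu : X -> probability (BndSpace Sigma) R) : Prop :=
  [/\ (forall alpha, nu alpha (boundary_at I act alpha) = 1%E),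
      (forall alpha x beta y, run act alpha x = Some beta -> inM act beta y ->
         nu alpha (upset I (x ++ y)) = (nu alpha (upset I x) * nu beta (upset I y))%E) &
      exists t : R, exists Delta : X -> X -> R,
        [/\ 0 < t, (forall a b, 0 < Delta a b) &
          forall alpha x beta, run act alpha x = Some beta ->
            nu alpha (upset I x) = (t ^+ size x * Delta alpha beta)%:E]].

Definition fval (Sigma X : finType) (I : rel Sigma) (R : realType)
  (nu : X -> probability (BndSpace Sigma) R) (alpha : X) (w : seq Sigma) : R :=
  fine (nu alpha (upset I w)).

Definition mobius (Sigma X : finType) (I : rel Sigma) (R : realType)
  (nu : X -> probability (BndSpace Sigma) R) (alpha : X) (c : {set Sigma}) : R :=
  \sum_(c' : {set Sigma} | is_clique I c' && (c \subset c'))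
     (-1) ^+ (#|c'| - #|c|) * fval I nu alpha (cword c').

(* Main.v *)
Require Import Defs.
From HB Require Import structures.
From mathcomp Require Import all_boot all_order all_algebra.
From mathcomp Require Import all_classical all_reals all_analysis.
From mathcomp Require Import lra.
Set Implicit Arguments. Unset Strict Implicit. Unset Printing Implicit Defensive.
Import Order.TTheory GRing.Theory Num.Theory.
Local Open Scope ring_scope.

Section Comb.
Local Open Scope nat_scope.
Variables (Sigma : finType) (I : rel Sigma).
Hypothesis HIirr : irreflexive I.
Hypothesis HIsym : symmetric I.

Fixpoint minb (w : seq Sigma) (l : Sigma) : bool :=
  if w is b :: w' then (b == l) || (I b l && minb w' l) else false.

Lemma minb_rcons w a l :
  minb (rcons w a) l = minb w l || ((a == l) && all (fun b => I b l) w).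
Proof.
elim: w => [|b w IH] /=; first by rewrite andbF orbF andbT.
rewrite IH; case: (b == l) => //=.
by case: (I b l); case: (minb w l); case: (a == l); case: (all _ w).
Qed.

Definition Inv (st : nat * (nat -> {set Sigma})) (w : seq Sigma) :=
  (forall i, (st.1 <= i)%N -> st.2 i = finset.set0) /\
  (forall b, (b \in w) = [exists i : 'I_st.1, b \in st.2 i]).

Lemma max_eq0 h (P : pred 'I_h) :
  ((\max_(i < h | P i) i.+1) == 0)%N = ~~ [exists i, P i].
Proof.
apply/eqP/idP.
  move=> H; apply/existsP => [[i Pi]].
  have := @leq_bigmax_cond _ P (fun i : 'I_h => i.+1) i Pi; rewrite H //.
move=> /existsPn H; rewrite big1 // => i Pi; by have := H i; rewrite Pi.
Qed.

Lemma nf_inv w : Inv (nf_state I w) w /\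
  (forall l, (l \in Cl I w 0) = minb w l).
Proof.
elim/last_ind: w => [|w a [[H0 H1] IH]].
  split; first (split=> [i _ //|b]); last by move=> l; rewrite /Cl /= inE.
  by rewrite in_nil; apply/esym/existsP => [[[i Hi]]].
rewrite /Cl /nf_state -cats1 foldl_cat -/(nf_state I w) /=.
move: H0 H1 IH; rewrite /Cl; case: (nf_state I w) => h s /= H0 H1 IH.
set l := (\max_(i < h | _) _)%N.
have Hl : (l == 0)%N = all (fun b => I b a) w.
  rewrite max_eq0; apply/idP/idP.
    move=> /existsPn Hn; apply/allP => b bw.
    move: (bw); rewrite H1 => /existsP [i bi].
    have := Hn i; rewrite negb_exists => /forallP /(_ b); rewrite bi /= negbK.
    by rewrite HIsym.
  move=> /allP Ha; apply/existsPn => i; apply/existsPn => b; apply/negP => /andP [bi].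
  have bw : b \in w by rewrite H1; apply/existsP; exists i.
  by rewrite HIsym Ha.
have Hsl : forall b, b \in s l -> b \in w.
  move=> b bl; case: (ltnP l h) => lh.
    by rewrite H1; apply/existsP; exists (Ordinal lh).
  by move: bl; rewrite H0 // inE.
split; first split.
- move=> i /=; rewrite geq_max => /andP [hi li].
  have : i != l by apply: contraTneq li => ->; rewrite ltnn.
  by move/negbTE => ->; rewrite H0.
- move=> b /=; rewrite cats1 mem_rcons inE; apply/idP/idP.
    case/orP => [/eqP ->|bw].
      by apply/existsP; exists (Ordinal (leq_maxr h l.+1)); rewrite eqxx setU11.
    move: (bw); rewrite H1 => /existsP [i bi].
    apply/existsP; exists (widen_ord (leq_maxl h l.+1) i) => /=.
    by case: ifP => _ //; rewrite setU1r.
  move=> /existsP [[i Hi]] /=; case: ifP => [/eqP ->|_].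
    by rewrite in_setU1 => /orP [->//|/Hsl ->]; rewrite orbT.
  move=> bi; apply/orP; right; case: (ltnP i h) => ih.
    by rewrite H1; apply/existsP; exists (Ordinal ih).
  by move: bi; rewrite H0 // inE.
- move=> l' /=; rewrite cats1 minb_rcons -IH eq_sym.
  case: (l =P 0)%N => [E|E].
    rewrite in_setU1; case: (l' =P a) => [->|ne] /=; last by move/eqP: ne; rewrite eq_sym => /negbTE ->; rewrite /= orbF.
    by rewrite eqxx -Hl E eqxx orbT.
  case: (a =P l') => [<-|_] /=; last by rewrite orbF.
  by move: Hl; rewrite (introF eqP E) => <-; rewrite orbF.
Qed.

Lemma Cl0 w l : (l \in Cl I w 0) = minb w l.
Proof. by case: (nf_inv w). Qed.


Definition pindep (s : seq Sigma) := forall a b, a \in s -> b \in s -> a != b -> I a b.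

Lemma nf_clique s : uniq s -> pindep s ->
  (nf_state I s).1 <= 1 /\
  forall i, (nf_state I s).2 i = if i == 0 then [set x in s] else finset.set0.
Proof.
elim/last_ind: s => [|s a IH] /=.
  move=> _ _; split => // i; case: ifP => _ //; apply/setP => x; rewrite !inE //.
rewrite rcons_uniq => /andP [as_ us] pi.
have pis : pindep s by move=> x y xs ys; apply: pi; rewrite mem_rcons inE ?xs ?ys orbT.
case: (IH us pis); rewrite /nf_state -cats1 foldl_cat -/(nf_state I s) /=.
case: (nf_state I s) => h f /= h1 Hf.
set l := (\max_(i < h | _) _)%N.
have l0 : l = 0%N.
  apply/eqP; rewrite max_eq0; apply/existsPn => i; apply/existsPn => b.
  apply/negP => /andP [bi]; apply/negP; rewrite negbK.
  have i0 : nat_of_ord i = 0 by move: bi; case: i => [[|i]] //= Hi; move: (leq_trans Hi h1).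
  move: bi; rewrite Hf i0 /= inE => bs.
  apply: pi; rewrite ?mem_rcons ?inE ?eqxx ?bs ?orbT //.
  by apply: contraNneq as_ => ->.
rewrite l0; split; first by rewrite geq_max h1.
move=> i; case: (i =P 0) => [->|/eqP ni] /=; rewrite ?Hf ?(negbTE ni) //=.
by apply/setP => x; rewrite !inE cats1 mem_rcons inE.
Qed.

Lemma Cl_clique s i : uniq s -> pindep s ->
  Cl I s i = if i == 0 then [set x in s] else finset.set0.
Proof. by move=> u p; rewrite /Cl; case: (nf_clique u p) => _ ->. Qed.

Lemma minb_indep w a b : minb w a -> minb w b -> a != b -> I a b.
Proof.
elim: w => [//|c w IH] /=.
case: (c =P a) => [<-|_] /=; case: (c =P b) => [<-|_] /=.
- by [].
- by move=> _ /andP [].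
- by move=> /andP [H _] _ _; rewrite HIsym.
- by move=> /andP [_ Ha] /andP [_ Hb]; apply: IH.
Qed.

Lemma minb_rem w a b : minb w b -> a != b -> minb (rem a w) b.
Proof.
elim: w => [//|c w IH] /=.
case: (c =P a) => [->|ca] /=.
  by case: (a =P b) => [->|_] //= /andP [].
by case: (c =P b) => //= _ /andP [-> /IH H] /H.
Qed.

Lemma minb_mem w a : minb w a -> a \in w.
Proof.
elim: w => [//|c w IH] /=; rewrite inE.
by case: (c =P a) => [->|_] /=; [rewrite eqxx | move=> /andP [_ /IH ->]; rewrite orbT].
Qed.

End Comb.

Section Runs.
Variables (Sigma X : finType) (I : rel Sigma) (act : X -> Sigma -> option X).
Hypothesis HIsym : symmetric I.
Hypothesis Hact : action_compatible I act.

Lemma act_swap o a b : I a b ->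
  act_opt act (act_opt act o a) b = act_opt act (act_opt act o b) a.
Proof. by case: o => [x|] //= /Hact ->. Qed.

Lemma runo_None w : foldl (act_opt act) None w = None.
Proof. by elim: w. Qed.

Lemma run_rem o w a : minb I w a ->
  foldl (act_opt act) o w = foldl (act_opt act) (act_opt act o a) (rem a w).
Proof.
elim: w o => [//|b w IH] o /=.
case: (b =P a) => [->|ba] //= /andP [Iba Hw].
by rewrite IH // act_swap // HIsym.
Qed.

Lemma run_mins g w s : run act g w != None -> uniq s -> all (minb I w) s ->
  run act g s != None.
Proof.
elim: s g w => [//|a s IH] g w /=.
move=> Hw /andP [aS us] /andP [ma ms].
move: Hw; rewrite /run (run_rem _ ma) /=.
case E: (act g a) => [g'|]; last by rewrite runo_None.
move=> Hw; apply: (IH g' (rem a w)) => //.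
apply/allP => b bs; apply: minb_rem; first by move/allP: ms; apply.
by apply: contraNneq aS => ->.
Qed.

End Runs.

Lemma alt_sum (T : finType) (R : realType) (c d : {set T}) : c \subset d ->
  \sum_(c' : {set T} | (c \subset c') && (c' \subset d))
     (-1) ^+ (#|c'| - #|c|)%N = (c == d)%:R :> R.
Proof.
move=> cd; case: (c =P d) => [<-|cnd].
  rewrite (big_pred1 c) ?subnn ?expr0 // => c'; rewrite /= andbC -finset.eqEsubset eq_sym //.
have [a /setDP [ad anc]] : exists a, a \in d :\: c.
  apply/set0Pn; rewrite finset.setD_eq0; apply/negP => dc; apply: cnd; apply/eqP; rewrite finset.eqEsubset cd dc //.
set F := fun c' : {set T} => (-1) ^+ (#|c'| - #|c|)%N : R.
pose f := fun c' : {set T} => if a \in c' then c' :\ a else a |: c'.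
have ff : involutive f.
  move=> x; rewrite /f; case: (boolP (a \in x)) => ax.
    by rewrite finset.setD11 /= finset.setD1K.
  by rewrite finset.setU11 /= finset.setU1K.
have Pf : forall x, ((c \subset f x) && (f x \subset d)) = ((c \subset x) && (x \subset d)).
  move=> x; rewrite /f; case: ifP => ax.
    rewrite finset.subsetD1 anc andbT; congr (_ && _); apply/idP/idP.
      move=> H; apply/fintype.subsetP => y yx; case: (y =P a) => [->//|/eqP ya].
      by apply: (fintype.subsetP H); rewrite !inE ya yx.
    by move=> H; apply: fintype.subset_trans (finset.subD1set _ _) H.
  rewrite finset.subUset finset.sub1set ad /=; apply/idP/idP.
    move=> /andP [H ->]; rewrite andbT; apply/fintype.subsetP => y yc.
    have := fintype.subsetP H y yc; rewrite finset.in_setU1 => /orP [/eqP ya|//].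
    by move: anc; rewrite -ya yc.
  by move=> /andP [H ->]; rewrite andbT; apply: fintype.subset_trans H (finset.subsetUr _ _).
have Ff : forall x : {set T}, (c \subset x) && (x \subset d) -> F (f x) = - F x.
  move=> x /andP [cx xd]; rewrite /F /f; case: ifP => ax.
    have cxa : c \subset x :\ a.
      apply/fintype.subsetP => y yc; rewrite !inE (fintype.subsetP cx) // andbT.
      by apply: contraNneq anc => <-.
    rewrite (finset.cardsD1 a x) ax add1n subSn ?subset_leq_card // exprS mulN1r opprK //.
  rewrite finset.cardsU1 ax add1n subSn ?subset_leq_card // exprS mulN1r //.
have -> : \sum_(c' : {set T} | (c \subset c') && (c' \subset d)) F c' = 0.
  set S := (X in X = 0).
  have : S = - S.
    rewrite {1}/S (reindex_inj (inv_inj ff)) /=.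
    rewrite /S -sumrN; apply: eq_big => x; first by rewrite Pf.
    by rewrite Pf; exact: Ff.
  move=> H; lra.
done.
Qed.
Local Open Scope classical_set_scope.
Section Meas.
Variables (Sigma X : finType) (I : rel Sigma) (act : X -> Sigma -> option X)
  (R : realType) (nu : X -> probability (BndSpace Sigma) R).

Let T := BndSpace Sigma.

Lemma cyl_meas i c : measurable [set xi : T | xi i = c].
Proof. by apply: sub_sigma_algebra; exists i, c. Qed.

Lemma meas_bigcup (U : countType) (P : set U) (F : U -> set T) :
  (forall i, P i -> measurable (F i)) -> measurable (\bigcup_(i in P) F i).
Proof.
move=> HF; rewrite bigcup_mkcond; apply: countable_bigcupT_measurable.
  exact: countableP.
by move=> i; case: ifPn => // /set_mem /HF.
Qed.

Lemma meas_pred i (Q : set {set Sigma}) : measurable [set xi : T | Q (xi i)].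
Proof.
have -> : [set xi : T | Q (xi i)] = \bigcup_(c in Q) [set xi : T | xi i = c].
  by apply/seteqP; split => xi /=; [move=> Hq; exists (xi i) | move=> [c Qc ->]].
by apply: meas_bigcup => c _; exact: cyl_meas.
Qed.

Lemma meas_pred2 i j (Q : set ({set Sigma} * {set Sigma})) :
  measurable [set xi : T | Q (xi i, xi j)].
Proof.
have -> : [set xi : T | Q (xi i, xi j)] =
   \bigcup_(p in Q) ([set xi : T | xi i = p.1] `&` [set xi : T | xi j = p.2]).
  apply/seteqP; split => xi /=; first by move=> Hq; exists (xi i, xi j).
  by move=> [[c d] Qc [/= -> ->]].
by apply: meas_bigcup => c _; apply: measurableI; exact: cyl_meas.
Qed.

Lemma meas_B : measurable (boundary I : set T).
Proof.
pose Qb := fun p : {set Sigma} * {set Sigma} =>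
  [/\ p.1 != finset.set0, is_clique I p.1 & clique_arrow I p.1 p.2].
have -> : (boundary I : set T) = \bigcap_i [set xi : T | Qb (xi i, xi i.+1)].
  by apply/seteqP; split => xi /= H i; [move=> _; exact: (H i) | exact: (H i (Logic.I))].
by apply: bigcapT_measurable => i; exact: (meas_pred2 i i.+1 Qb).
Qed.

Lemma meas_bM g : measurable (boundary_at I act g : set T).
Proof.
have -> : (boundary_at I act g : set T) = (boundary I : set T) `&`
   \bigcap_n \bigcup_(w in [set w | inM act g w])
      \bigcap_i (if (i < n)%N then [set xi : T | xi i = Cl I w i] else setT).
  apply/seteqP; split => xi /= [Hb H]; split => // n.
    case: (H n) => w [Hw Hi]; exists w => // i _.
    by case: ifP => // /Hi ->.
  case: (H n Logic.I) => w Hw Hi; exists w; split => // i lt.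
  by have := Hi i Logic.I; rewrite lt => ->.
apply: measurableI; first exact: meas_B.
apply: bigcapT_measurable => n; apply: meas_bigcup => w _.
apply: bigcapT_measurable => i.
case: ifP => _; [exact: cyl_meas | exact: measurableT].
Qed.

Definition pr g (A : set T) : R := fine (nu g A).
Definition Z (Q : pred {set Sigma}) : set T :=
  (boundary I : set T) `&` [set xi : T | Q (xi 0%N)].
Definition Pd g (d : {set Sigma}) := pr g (Z (fun x => x == d)).

Lemma meas_Z Q : measurable (Z Q).
Proof. apply: measurableI; [exact: meas_B | exact: (meas_pred 0 (fun d => Q d))]. Qed.

Lemma nu_fin g A : measurable A -> nu g A \is a fin_num.
Proof.
move=> mA; rewrite ge0_fin_numE ?measure_ge0 //.
by apply: (le_lt_trans (probability_le1 _ mA)); rewrite ltry.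
Qed.

Lemma prE g A : measurable A -> nu g A = (pr g A)%:E.
Proof. by move=> mA; rewrite /pr fineK // nu_fin. Qed.

Lemma pr_ge0 g A : 0 <= pr g A.
Proof. by apply: fine_ge0; apply: measure_ge0. Qed.

Lemma pr_le1 g A : measurable A -> pr g A <= 1.
Proof. by move=> mA; rewrite -lee_fin -prE //; apply: probability_le1. Qed.

Lemma prU g A B : measurable A -> measurable B -> A `&` B = set0 ->
  pr g (A `|` B) = pr g A + pr g B.
Proof.
move=> mA mB AB; apply/eqP; rewrite -eqe -prE ?EFinD -?prE //; last exact: measurableU.
by rewrite measureU.
Qed.

Lemma pr_le g A B : measurable A -> measurable B -> A `<=` B -> pr g A <= pr g B.
Proof. by move=> mA mB AB; rewrite -lee_fin -!prE //; apply: le_measure; rewrite ?inE. Qed.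

Lemma pr0 g : pr g set0 = 0.
Proof. by rewrite /pr measure0. Qed.

Lemma sumP_seq g (r : seq {set Sigma}) : uniq r ->
  pr g (Z (fun x => x \in r)) = \sum_(d <- r) Pd g d.
Proof.
elim: r => [|d r IH] /=.
  rewrite big_nil => _; rewrite -(pr0 g); congr pr.
  by apply/seteqP; split => xi //= [].
move=> /andP [dr ur]; rewrite big_cons -IH //.
rewrite -prU; [|exact: meas_Z|exact: meas_Z|].
  congr pr; apply/seteqP; split => xi; rewrite /Z /=.
    by move=> [Hb]; rewrite inE => /orP [H|H]; [left|right].
  by case=> -[Hb H]; split => //; rewrite inE H ?orbT.
apply/seteqP; split => xi //; rewrite /Z /= => -[[_ /eqP E] [_ H]].
by move: dr; rewrite -E H.
Qed.

Lemma sumP g (Q : pred {set Sigma}) : pr g (Z Q) = \sum_(d | Q d) Pd g d.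
Proof.
rewrite -big_filter -sumP_seq ?filter_uniq ?enum_uniq //.
congr pr; apply/seteqP; split => xi; rewrite /Z /= => -[Hb]; rewrite ?mem_filter ?mem_index_enum ?andbT => H; split => //.
exact: index_enum_uniq.
Qed.

End Meas.

Section Exch.
Variables (S : finType) (R : realType).

Lemma exch (A : pred {set S}) (Bp : {set S} -> {set S} -> bool)
  (f : {set S} -> R) (P : {set S} -> R) :
  \sum_(s | A s) f s * \sum_(d | Bp s d) P d =
  \sum_d P d * \sum_(s | A s && Bp s d) f s.
Proof.
rewrite big_mkcond /=.
transitivity (\sum_s \sum_d (if A s && Bp s d then f s * P d else 0)).
  apply: eq_bigr => s _; case: (A s) => /=; last by rewrite big1.
  by rewrite mulr_sumr big_mkcond /=; apply: eq_bigr => d _; case: (Bp s d).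
rewrite exchange_big /=; apply: eq_bigr => d _.
rewrite mulr_sumr [RHS]big_mkcond /=; apply: eq_bigr => s _.
by case: (A s && Bp s d) => //=; rewrite mulrC.
Qed.

Lemma IE (P : {set S} -> R) (E0 L : {set S}) :
  \sum_(s : {set S} | s \subset L) (-1) ^+ #|s| * \sum_(d : {set S} | (E0 :|: s) \subset d) P d =
  \sum_(d : {set S} | (E0 \subset d) && (L :&: d == finset.set0)) P d.
Proof.
rewrite exch [RHS]big_mkcond /=; apply: eq_bigr => d _.
case: (boolP (E0 \subset d)) => E0d /=; last first.
  rewrite big_pred0 ?mulr0 // => s; rewrite finset.subUset (negbTE E0d) andbF //.
rewrite (eq_bigl (fun s : {set S} => (finset.set0 \subset s) && (s \subset L :&: d))); last first.
  by move=> s; rewrite finset.subUset E0d finset.subsetI finset.sub0set.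
have Ha : \sum_(s : {set S} | (finset.set0 \subset s) && (s \subset L :&: d)) (-1) ^+ #|s|
    = (finset.set0 == L :&: d)%:R :> R.
  rewrite -(alt_sum R (finset.sub0set (L :&: d))); apply: eq_bigr => s _.
  by rewrite cards0 subn0.
rewrite Ha eq_sym; case: (_ == _); by rewrite ?mulr1 ?mulr0.
Qed.

End Exch.

Section Main.
Variables (Sigma X : finType) (I : rel Sigma) (act : X -> Sigma -> option X)
  (R : realType) (nu : X -> probability (BndSpace Sigma) R).
Hypotheses (HIirr : irreflexive I) (HIsym : symmetric I)
  (Hact : action_compatible I act) (Hnu : uniform_measure I act nu).

Local Notation pr := (pr nu).
Local Notation Z := (Z I).
Local Notation Pd := (Pd I nu).
Let T := BndSpace Sigma.

Lemma upsetE s : uniq s -> pindep I s ->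
  (upset I s : set T) = Z (fun d => [set x in s] \subset d).
Proof.
move=> us ps; apply/seteqP; split => xi; rewrite /Z /= => -[Hb H]; split => //.
  by have := H 0%N; rewrite Cl_clique.
move=> i; rewrite Cl_clique //; case: (i =P 0%N) => [->|_] //; exact: finset.sub0set.
Qed.

Lemma subclique (A d : {set Sigma}) : is_clique I d -> A \subset d -> is_clique I A.
Proof.
move=> /forallP Hd Ad; apply/forallP => a; apply/implyP => aA.
apply/forallP => b; apply/implyP => bA.
have /implyP := Hd a; move/(_ (fintype.subsetP Ad a aA)) => /forallP /(_ b) /implyP.
by apply; apply: (fintype.subsetP Ad).
Qed.

Lemma Z_nc (Q : pred {set Sigma}) : (forall d, Q d -> ~~ is_clique I d) -> Z Q = set0.
Proof.
move=> H; apply/seteqP; split => xi //; rewrite /Z /= => -[Hb Hq].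
by have := H _ Hq; case: (Hb 0%N) => _ ->.
Qed.

Lemma nc0 g (A : {set Sigma}) : ~~ is_clique I A -> pr g (Z (fun d => A \subset d)) = 0.
Proof.
move=> nA; rewrite Z_nc ?pr0 // => d Ad; apply: contra nA => cd.
exact: subclique cd Ad.
Qed.

Lemma full g (Q : pred {set Sigma}) : (forall w, inM act g w -> Q (Cl I w 0)) ->
  pr g (Z Q) = 1.
Proof.
move=> HQ; case: Hnu => H1 _ _.
apply/le_anti; rewrite pr_le1 /=; last exact: meas_Z.
have -> : 1 = pr g (boundary_at I act g) by rewrite /pr H1.
apply: pr_le; [exact: meas_bM | exact: meas_Z |].
move=> xi [Hb H]; split => //; case: (H 1%N) => w [Hw Hc].
have := HQ _ Hw; rewrite (Hc 0%N) //.
Qed.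

Lemma null g (Q : pred {set Sigma}) : (forall w, inM act g w -> ~~ Q (Cl I w 0)) ->
  pr g (Z Q) = 0.
Proof.
move=> HQ; have H1 := @full g (fun d => ~~ Q d) HQ.
have Hs : pr g (Z Q) + pr g (Z (fun d => ~~ Q d)) = pr g (Z predT).
  by rewrite !sumP [RHS](bigID Q).
have Hle : pr g (Z predT) <= 1 by apply: pr_le1; exact: meas_Z.
have H0 : 0 <= pr g (Z Q) by apply: pr_ge0.
move: Hle; rewrite -Hs H1; lra.
Qed.

Lemma supp g s : uniq s -> run act g s = None ->
  pr g (Z (fun d => [set x in s] \subset d)) = 0.
Proof.
move=> us Hs; apply: null => w Hw; apply/negP => Hsub.
have : run act g s != None.
  apply: (run_mins Hact Hw us); apply/allP => a aS.
  by rewrite -(Cl0 HIsym); apply: (fintype.subsetP Hsub); rewrite inE.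
by rewrite Hs.
Qed.

Lemma Zext (Q1 Q2 : pred {set Sigma}) : (forall d, Q1 d = Q2 d) -> Z Q1 = Z Q2.
Proof. by move=> H; rewrite (_ : Q1 = Q2) //; apply: funext => d; apply: H. Qed.

Lemma enum_pindep (A : {set Sigma}) : is_clique I A -> pindep I (enum A).
Proof.
move=> /forallP HA a b; rewrite !mem_enum => aA bA ab.
by have /implyP /(_ aA) /forallP /(_ b) /implyP /(_ bA) /implyP := HA a; apply.
Qed.

Lemma TL g e g' (A : {set Sigma}) : act g e = Some g' -> e \notin A ->
  (forall b, b \in A -> I e b) ->
  pr g (Z (fun d => (e |: A) \subset d)) =
  pr g (Z (fun d => [set e]%SET \subset d)) * pr g' (Z (fun d => A \subset d)).
Proof.
move=> He eA HA.
case: (boolP (is_clique I A)) => cA; last first.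
  rewrite (nc0 g' cA) mulr0 nc0 //; apply: contra cA => c.
  by apply: subclique c _; exact: finset.subsetUr.
have ps : pindep I (e :: enum A).
  move=> a b; rewrite !inE !mem_enum => /orP [/eqP ->|aA] /orP [/eqP ->|bA].
  - by rewrite eqxx.
  - by move=> _; apply: HA.
  - by move=> _; rewrite HIsym; apply: HA.
  - by apply: (enum_pindep cA); rewrite mem_enum.
have us : uniq (e :: enum A) by rewrite /= mem_enum eA enum_uniq.
have SE : [set x in e :: enum A] = e |: A by apply/setP => x; rewrite !inE mem_enum.
have SE1 : [set x in [:: e]] = [set e]%SET by apply/setP => x; rewrite !inE.
have E1 : (upset I (e :: enum A) : set T) = Z (fun d => (e |: A) \subset d).
  by rewrite upsetE // SE.
have E2 : (upset I [:: e] : set T) = Z (fun d => [set e]%SET \subset d).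
  rewrite upsetE // ?SE1 //.
  by move=> a b; rewrite !inE => /eqP -> /eqP ->; rewrite eqxx.
have E3 : (upset I (enum A) : set T) = Z (fun d => A \subset d).
  have SE3 : [set x in enum A] = A by apply/setP => x; rewrite inE mem_enum.
  rewrite upsetE; [|exact: enum_uniq|exact: enum_pindep]. 
  by apply: f_equal; apply: funext => d; apply: eq_subset => x; rewrite inE mem_enum.
case E: (run act g' (enum A)) => [b|].
  case: Hnu => _ Hm _.
  have := Hm g [:: e] g' (enum A); rewrite {1}/run /= He => /(_ erefl).
  rewrite /inM E => /(_ erefl) H.
  rewrite /pr -E1 -E2 -E3 H fineM // nu_fin //; [rewrite E2 | rewrite E3]; exact: meas_Z.
have Z3 : pr g' (Z (fun d => A \subset d)) = 0.
  rewrite (@Zext (fun d => A \subset d) (fun d => [set x in enum A] \subset d)).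
    by apply: supp; rewrite ?enum_uniq.
  by move=> d; apply: eq_subset => x; rewrite inE mem_enum.
rewrite Z3 mulr0 -SE supp // /run /= He; exact: E.
Qed.

Lemma upset1 e : (upset I [:: e] : set T) = Z (fun d => [set e]%SET \subset d).
Proof.
rewrite upsetE //; last by move=> a b; rewrite !inE => /eqP -> /eqP ->; rewrite eqxx.
by apply: Zext => d; apply: eq_subset => x; rewrite !inE.
Qed.

Lemma pr_e_pos g e g' : act g e = Some g' -> 0 < pr g (Z (fun d => [set e]%SET \subset d)).
Proof.
move=> He; case: Hnu => _ _ [t [Dl [t0 D0 H3]]].
have := H3 g [:: e] g'; rewrite {1}/run /= He => /(_ erefl).
rewrite upset1 /pr => ->; rewrite /= expr1; exact: mulr_gt0.
Qed.

Lemma KD g e g' (e0 L : {set Sigma}) : act g e = Some g' -> e \notin L -> e \notin e0 ->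
  (forall b, b \in e0 -> I e b) ->
  pr g (Z (fun d => ((e |: e0) \subset d) && (L :&: d == finset.set0))) =
  pr g (Z (fun d => [set e]%SET \subset d)) *
  pr g' (Z (fun d => (e0 \subset d) && ((L :&: [set b | I e b]) :&: d == finset.set0))).
Proof.
move=> He eL ee0 Ie0.
set L' := L :&: [set b | I e b].
rewrite (sumP I nu g (fun d => ((e |: e0) \subset d) && (L :&: d == finset.set0))).
rewrite (sumP I nu g' (fun d => (e0 \subset d) && (L' :&: d == finset.set0))) -!IE.
rewrite (bigID (fun s : {set Sigma} => s \subset L')) /= [X in _ + X]big1 ?addr0; last first.
  move=> s /andP [sL /subsetPn [b bs bL']].
  rewrite -(sumP I nu g (fun d => ((e |: e0) :|: s) \subset d)) nc0 ?mulr0 //.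
  apply/negP => /forallP /(_ e) /implyP; rewrite !inE eqxx => /(_ isT).
  move=> /forallP /(_ b) /implyP; rewrite !inE bs orbT => /(_ isT) /implyP.
  have bL : b \in L by apply: (fintype.subsetP sL).
  have eb : e != b by apply: contraNneq eL => ->.
  move=> /(_ eb) Ieb; move: bL'; rewrite !inE bL Ieb.
  by [].
rewrite (eq_bigl (fun s : {set Sigma} => s \subset L')); last first.
  move=> s; apply/idP/idP; first by case/andP.
  move=> sL'; rewrite sL' andbT; apply: fintype.subset_trans sL' _.
  exact: finset.subsetIl.
rewrite mulr_sumr; apply: eq_bigr => s sL'.
rewrite -(sumP I nu g (fun d => ((e |: e0) :|: s) \subset d)).
rewrite -(sumP I nu g' (fun d => (e0 :|: s) \subset d)).
rewrite -finset.setUA (TL He) //.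
- by rewrite mulrCA.
- rewrite !inE negb_or ee0 /=; apply: contraNN eL => es.
  by have := fintype.subsetP sL' e es; rewrite !inE => /andP [].
- move=> b; rewrite inE => /orP [/Ie0 //|bs].
  by have := fintype.subsetP sL' b bs; rewrite !inE => /andP [].
Qed.

Lemma IC z : forall g (e0 L : {set Sigma}), is_clique I e0 -> inM act g z ->
  (forall b y, run act g z = Some b -> inM act b y ->
     (e0 \subset Cl I (z ++ y) 0) && (L :&: Cl I (z ++ y) 0 == finset.set0)) ->
  0 < pr g (Z (fun d => (e0 \subset d) && (L :&: d == finset.set0))).
Proof.
elim: z => [|e z IH] g e0 L ce0 Hz H.
  by rewrite full ?ltr01 // => w Hw; exact: (H g w erefl Hw).
move: Hz; rewrite /inM {1}/run /=.
case He: (act g e) => [g'|]; last by rewrite runo_None.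
move=> Hz.
have Hrun : run act g (e :: z) = run act g' z by rewrite /run /= He.
case Eb: (run act g' z) Hz => [b|]; last by move/eqP.
move=> _.
have /andP [He0 HL] : (e0 \subset Cl I (e :: z) 0) && (L :&: Cl I (e :: z) 0 == finset.set0).
  by have := H b [::] (etrans Hrun Eb) erefl; rewrite cats0.
have eCl : e \in Cl I (e :: z) 0 by rewrite Cl0 //= eqxx.
have eL : e \notin L.
  apply/negP => eL; move/eqP: HL => /setP /(_ e); rewrite !inE eL eCl //.
have Ie : forall x, x \in e0 :\ e -> I e x.
  move=> x; rewrite !inE => /andP [xe xe0].
  apply: (@minb_indep _ _ HIsym (e :: z)); rewrite -?Cl0 //.
    exact: (fintype.subsetP He0).
  by rewrite eq_sym.
set e0' := e0 :\ e.
set L' := L :&: [set x | I e x].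
have IH' : 0 < pr g' (Z (fun d => (e0' \subset d) && (L' :&: d == finset.set0))).
  apply: IH.
  - by apply: subclique ce0 _; exact: finset.subD1set.
  - by rewrite /inM Eb.
  move=> b' y Hb' Hy; have := H b' y (etrans Hrun Hb') Hy => /andP [H1 H2].
  apply/andP; split.
    apply/fintype.subsetP => x; rewrite !inE => /andP [xe xe0].
    have := fintype.subsetP H1 x xe0; rewrite !Cl0 //= (negbTE _ : (e == x) = false) /=.
      by case/andP.
    by rewrite eq_sym.
  apply/eqP/setP => x; rewrite !inE; apply/negP => /andP [/andP [xL Iex] xCl].
  move/eqP: H2 => /setP /(_ x); rewrite !inE xL /= Cl0 //= Iex.
  by rewrite -Cl0 // xCl orbT.
have Hle : pr g (Z (fun d => ((e |: e0') \subset d) && (L :&: d == finset.set0))) <=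
    pr g (Z (fun d => (e0 \subset d) && (L :&: d == finset.set0))).
  apply: pr_le; [exact: meas_Z | exact: meas_Z |].
  move=> xi [Hb /andP [Hs Hl]]; split => //; apply/andP; split => //.
  apply: fintype.subset_trans Hs; apply/fintype.subsetP => x xe0.
  by rewrite !inE; case: (x =P e) => //= _; rewrite xe0.
apply: (lt_le_trans _ Hle).
rewrite (KD He) //; first exact: mulr_gt0 (pr_e_pos He) IH'.
by rewrite !inE eqxx.
Qed.

Lemma mobius_eq g c : mobius I nu g c = Pd g c.
Proof.
rewrite /mobius.
have step1 : forall c', is_clique I c' ->
    fval I nu g (cword c') = \sum_(d : {set Sigma} | c' \subset d) Pd g d.
  move=> c' cc; rewrite -(sumP I nu g (fun d => c' \subset d)).
  change (pr g (upset I (enum c')) = pr g (Z (fun d => c' \subset d))).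
  rewrite upsetE; [|exact: enum_uniq|exact: enum_pindep].
  by rewrite (@Zext _ (fun d => c' \subset d)) // => d; apply: eq_subset => x; rewrite inE mem_enum.
rewrite (eq_bigr (fun c' : {set Sigma} => (-1) ^+ (#|c'| - #|c|) *
    \sum_(d : {set Sigma} | c' \subset d) Pd g d)); last first.
  by move=> c' /andP [cc _]; rewrite step1.
have drop : \sum_(c' : {set Sigma} | is_clique I c' && (c \subset c'))
     (-1) ^+ (#|c'| - #|c|) * \sum_(d : {set Sigma} | c' \subset d) Pd g d =
   \sum_(c' : {set Sigma} | c \subset c')
     (-1) ^+ (#|c'| - #|c|) * \sum_(d : {set Sigma} | c' \subset d) Pd g d.
  rewrite [RHS](bigID (fun c' : {set Sigma} => is_clique I c')) /= [X in _ + X]big1 ?addr0.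
    by apply: eq_bigl => c'; rewrite andbC.
  move=> c' /andP [_ nc]; rewrite -(sumP I nu g (fun d => c' \subset d)) nc0 ?mulr0 //.
rewrite drop exch (bigD1 c) //= [X in _ + X]big1 ?addr0.
  by rewrite alt_sum ?eqxx ?mulr1.
move=> d dc; case: (boolP (c \subset d)) => cd.
  by rewrite alt_sum // eq_sym (negbTE dc) mulr0.
rewrite big_pred0 ?mulr0 // => c'; apply/negP => /andP [cc' c'd].
by move/negP: cd; apply; exact: fintype.subset_trans cc' c'd.
Qed.

Lemma lemma3_aux alpha c : positive_node I act alpha c -> 0 < mobius I nu alpha c.
Proof.
move=> [cc cn inc [x Hx Hpos]].
rewrite mobius_eq.
have := IC cc Hx (L := ~: c).
rewrite (@Zext _ (fun d => d == c)).
  apply; move=> b y Hb Hy; rewrite (Hpos b Hb y Hy) fintype.subxx /=.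
  by rewrite finset.setIC finset.setICr.
move=> d; rewrite finset.setIC -finset.setDE finset.setD_eq0 eq_sym finset.eqEsubset andbC.
by [].
Qed.

End Main.

Theorem lemma3 (Sigma X : finType) (I : rel Sigma)
  (HIirr : irreflexive I) (HIsym : symmetric I)
  (act : X -> Sigma -> option X) (Hact : action_compatible I act)
  (R : realType) (nu : X -> probability (BndSpace Sigma) R)
  (Hnu : uniform_measure I act nu) :
  forall (alpha : X) (c : {set Sigma}),
    positive_node I act alpha c -> 0 < mobius I nu alpha c.
Proof. by move=> alpha c; apply: lemma3_aux. Qed.
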